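(* Let the problem, the cone $\mathcal{C}$ and the complexity be as in the context, and assume $n_0\ge1$. Assume $$R=\sup_{k\in\mathbb{N}}\frac{\lambda_{n_{k-1}}}{\lambda_{n_k}}<\infty.$$ Let $\varepsilon,\rho>0$. Then for every $j\in\mathbb{N}$ satisfying $$\Big[\frac{(a+1)^2R^2}{(a-1)^2}+1\Big]\sum_{k=0}^{j}\frac{b^{2(k-j)}}{\lambda_{n_k}^2}<\frac{\rho^2}{\varepsilon^2},$$ one has $\mathrm{comp}(\mathcal{A}(\mathcal{C}),\varepsilon,\rho)\ge n_j$. In particular, $\mathrm{comp}(\mathcal{A}(\mathcal{C}),\varepsilon,\rho)\ge n_{j^*}$, where $j^*$ is the largest such $j$.
   Context: Let $\mathcal{F}$ and $\mathcal{G}$ be separable Hilbert spaces with orthonormal bases $(u_i)_{i\in\mathbb{N}}$ and $(v_i)_{i\in\mathbb{N}}$. Write $f=\sum_i\widehat f_iu_i$ with $\|f\|_{\mathcal{F}}=\|(\widehat f_i)_i\|_{\ell^2}$, and similarly for $\mathcal{G}$. Let $S:\mathcal{F}\to\mathcal{G}$ be the linear operator $S(f)=\sum_i\lambda_i\widehat f_iv_i$, where $\lambda_1\ge\lambda_2\ge\cdots>0$ and $\lambda_i\to0$. Let $\mathcal{B}_\rho=\{f:\|f\|_{\mathcal{F}}\le\rho\}$. For $\mathcal{H}\subseteq\mathcal{F}$, $\mathcal{A}(\mathcal{H})$ is the set of deterministic algorithms $A:\mathcal{H}\times(0,\infty)\to\mathcal{G}$ with $\|S(f)-A(f,\varepsilon)\|_{\mathcal{G}}\le\varepsilon$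 for all $f\in\mathcal{H}$ and all $\varepsilon>0$. Such an algorithm adaptively samples finitely many bounded linear functionals of $f$, and its output depends on $f$ only through those values. Costs are defined as follows: - $\mathrm{cost}(A,f,\varepsilon)$ is the number of functional values used to compute $A(f,\varepsilon)$; - $\mathrm{cost}(A,\mathcal{H},\varepsilon,\rho)=\sup\{\mathrm{cost}(A,f,\varepsilon):f\in\mathcal{H}\cap\mathcal{B}_\rho\}$; - $\mathrm{comp}(\mathcal{A}(\mathcal{H}),\varepsilon,\rho)=\min_{A\in\mathcal{A}(\mathcal{H})}\mathrm{cost}(A,\mathcal{H},\varepsilon,\rho)$. Let $n_0<n_1<\cdots$ be a strictly increasing, unbounded sequence of non-negative integers. For $j\in\mathbb{N}=\{1,2,\dots\}$ let $\sigma_j(f)=\|(\lambda_i\widehat f_i)_{i=n_{j-1}+1}^{n_j}\|_{\ell^2}$. Fix $0<b<1<a$ and let $\mathcal{C}=\{f\in\mathcal{F}:\sigma_{j+r}(f)\le ab^r\sigma_j(f)\ \forall j,r\in\mathbb{N}\}$. *)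

(* Defs.v *)
From Stdlib Require Import Reals ZArith List.
From Coquelicot Require Import Coquelicot.
Open Scope R_scope.

(* Coordinates are 0-indexed: a sequence x : nat -> R stands for the vector
   whose coefficient on the basis element u_(i+1) (resp. v_(i+1)) is x i.
   Likewise lam i stands for lambda_(i+1). *)

(** The Hilbert spaces F and G, identified with l^2 via their orthonormal bases. *)
Definition l2 (x : nat -> R) : Prop := ex_series (fun i => (x i) ^ 2).
Definition l2norm (x : nat -> R) : R := sqrt (Series (fun i => (x i) ^ 2)).

Definition Sop (lam : nat -> R) (f : nat -> R) : nat -> R := fun i => lam i * f i.

Definition bounded_linear_functional (L : (nat -> R) -> R) : Prop :=
  (forall (f g : nat -> R) (c : R), l2 f -> l2 g ->
      L (fun i => c * f i + g i) = c * L f + L g) /\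
  (exists C : R, 0 <= C /\ forall f, l2 f -> Rabs (L f) <= C * l2norm f).

(** A deterministic adaptive algorithm: for every tolerance eps, a strategy
    which, given the list of functional values observed so far, either
    requests one more bounded linear functional ([Some L]) or stops ([None]);
    the output is a function of the observed values only. *)
Record strategy := Strategy {
  next : list R -> option ((nat -> R) -> R);
  out  : list R -> (nat -> R)
}.
Definition algorithm := R -> strategy.

Fixpoint data (s : strategy) (f : nat -> R) (k : nat) : list R :=
  match k with
  | O => nil
  | S k' => let d := data s f k' in
            match next s d with
            | Some L => d ++ (L f :: nil)
            | None => d
            end
  end.

(** [stop_time s f k]: the strategy stops on f after exactly k functional
    values, i.e. cost(A,f,eps) = k. *)
Definition stop_time (s : strategy) (f : nat -> R) (k : nat) : Prop :=
  next s (data s f k) = None /\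
  forall k', (k' < k)%nat -> next s (data s f k') <> None.

Definition output (s : strategy) (f : nat -> R) (k : nat) : nat -> R :=
  out s (data s f k).

Definition in_alg_class (lam : nat -> R) (H : (nat -> R) -> Prop)
    (A : algorithm) : Prop :=
  forall (eps : R) (f : nat -> R), 0 < eps -> H f ->
    exists k : nat, stop_time (A eps) f k /\
      (forall k', (k' < k)%nat -> forall L,
          next (A eps) (data (A eps) f k') = Some L ->
          bounded_linear_functional L) /\
      l2 (fun i => Sop lam f i - output (A eps) f k i) /\
      l2norm (fun i => Sop lam f i - output (A eps) f k i) <= eps.

(** cost(A, H, eps, rho) >= N  (a supremum of naturals, possibly infinite). *)
Definition cost_ge (A : algorithm) (H : (nat -> R) -> Prop)
    (eps rho : R) (N : nat) : Prop :=
  exists f : nat -> R, H f /\ l2 f /\ l2norm f <= rho /\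
    forall k, stop_time (A eps) f k -> (N <= k)%nat.

(** comp(A(H), eps, rho) >= N : the minimum over A in A(H) of the cost. *)
Definition comp_ge (lam : nat -> R) (H : (nat -> R) -> Prop)
    (eps rho : R) (N : nat) : Prop :=
  forall A : algorithm, in_alg_class lam H A -> cost_ge A H eps rho N.

(** sigma_j(f) = || (lambda_i f_i)_{i = n_(j-1)+1 .. n_j} ||  (1-indexed i),
    i.e. 0-indexed coordinates n_(j-1) .. n_j - 1. *)
Definition sigma (lam : nat -> R) (n : nat -> nat) (f : nat -> R) (j : nat) : R :=
  sqrt (sum_n_m (fun i => (lam i * f i) ^ 2) (n (j - 1)%nat) (n j - 1)%nat).

Definition cone (lam : nat -> R) (n : nat -> nat) (a b : R) (f : nat -> R) : Prop :=
  l2 f /\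
  forall j r : nat, (1 <= j)%nat -> (1 <= r)%nat ->
    sigma lam n f (j + r) <= a * b ^ r * sigma lam n f j.

(** lambda_(n_k) in the 1-indexed convention of the paper. *)
Definition lamN (lam : nat -> R) (n : nat -> nat) (k : nat) : R := lam (n k - 1)%nat.

(* Main.v *)
Require Import Defs.
From Stdlib Require Import Reals ZArith Lia Lra Psatz Classical FunctionalExtensionality.
From Coquelicot Require Import Coquelicot.
Open Scope R_scope.
Open Scope R_scope.

Lemma sum_nonneg (a : nat -> R) lo hi :
  (forall k, 0 <= a k) -> 0 <= sum_n_m a lo hi.
Proof.
  intros Ha. apply Rle_trans with (sum_n_m (fun _ => 0) lo hi).
  - rewrite sum_n_m_const. lra.
  - apply sum_n_m_le. exact Ha.
Qed.

Lemma sum_sub (a : nat -> R) lo hi M :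
  (forall k, 0 <= a k) -> (hi <= M)%nat -> sum_n_m a lo hi <= sum_n_m a 0 M.
Proof.
  intros Ha Hh.
  destruct (le_lt_dec lo hi) as [Hl|Hl].
  2:{ rewrite sum_n_m_zero by lia. apply sum_nonneg; auto. }
  assert (E1 : sum_n_m a 0 M = plus (sum_n_m a 0 hi) (sum_n_m a (S hi) M))
    by (apply sum_n_m_Chasles; lia).
  rewrite E1. change (plus ?x ?y) with (x + y).
  assert (0 <= sum_n_m a (S hi) M) by (apply sum_nonneg; auto).
  destruct lo as [|lo].
  - lra.
  - assert (E2 : sum_n_m a 0 hi = plus (sum_n_m a 0 lo) (sum_n_m a (S lo) hi))
      by (apply sum_n_m_Chasles; lia).
    rewrite E2. change (plus ?x ?y) with (x + y).
    assert (0 <= sum_n_m a 0 lo) by (apply sum_nonneg; auto). lra.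
Qed.

Lemma sum_stable (a : nat -> R) M m :
  (forall i, (M < i)%nat -> a i = 0) -> (M <= m)%nat -> sum_n a m = sum_n a M.
Proof.
  intros Ha Hm. induction Hm. reflexivity.
  rewrite sum_Sn, IHHm, Ha by lia. change (plus ?x ?y) with (x + y). lra.
Qed.

Lemma finite_series (a : nat -> R) M :
  (forall i, (M < i)%nat -> a i = 0) -> is_series a (sum_n a M).
Proof.
  intros Ha. unfold is_series.
  apply filterlim_ext_loc with (fun _ => sum_n a M).
  - exists M. intros m Hm. symmetry. apply sum_stable; auto.
  - apply filterlim_const.
Qed.

Definition supp (N : nat) (g : nat -> R) := forall i, (N <= i)%nat -> g i = 0.
Definition linN (N : nat) (L : (nat -> R) -> R) :=
  forall f g c, supp N f -> supp N g -> L (fun i => c * f i + g i) = c * L f + L g.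

Lemma supp_l2 N f : supp N f -> l2 f.
Proof.
  intros H. unfold l2, ex_series. exists (sum_n (fun i => f i ^ 2) N). apply finite_series.
  intros i Hi. rewrite H by lia. ring.
Qed.

Lemma supp_S N f : supp N f -> supp (S N) f.
Proof. intros H i Hi. apply H. lia. Qed.

Lemma supp_zero N : supp N (fun _ => 0).
Proof. intros i _. reflexivity. Qed.

Lemma lin_zero N L : linN N L -> L (fun _ => 0) = 0.
Proof.
  intros HL. pose proof (HL (fun _ => 0) (fun _ => 0) 1 (supp_zero N) (supp_zero N)) as H.
  simpl in H. idtac.
  replace (fun i : nat => 1 * 0 + 0) with (fun _ : nat => 0) in H
    by (apply functional_extensionality; intros; ring).
  set (z := L (fun _ => 0)) in *. lra.
Qed.

Lemma lin_scale N L f c : linN N L -> supp N f -> L (fun i => c * f i) = c * L f.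
Proof.
  intros HL Hf. pose proof (HL f (fun _ => 0) c Hf (supp_zero N)) as H. cbv beta in H.
  replace (fun i : nat => c * f i + 0) with (fun i => c * f i) in H
    by (apply functional_extensionality; intros; ring).
  rewrite H, (lin_zero N L HL). ring.
Qed.

Lemma supp_scale N f c : supp N f -> supp N (fun i => c * f i).
Proof. intros H i Hi. rewrite H by auto. ring. Qed.

Lemma lin_comb N L f g x y : linN N L -> supp N f -> supp N g ->
  L (fun i => x * f i + y * g i) = x * L f + y * L g.
Proof.
  intros HL Hf Hg.
  pose proof (HL f (fun i => y * g i) x Hf (supp_scale N g y Hg)) as H. cbv beta in H. rewrite H.
  rewrite (lin_scale N L g y HL Hg). reflexivity.
Qed.

Definition unit_v (p : nat) : nat -> R := fun i => if Nat.eq_dec i p then 1 else 0.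

Lemma kernel : forall N m (Ls : nat -> (nat -> R) -> R),
  (m < N)%nat -> (forall i, (i < m)%nat -> linN N (Ls i)) ->
  exists g, supp N g /\ (exists i0, (i0 < N)%nat /\ g i0 <> 0) /\
            forall i, (i < m)%nat -> Ls i g = 0.
Proof.
  induction N as [|N IH]; intros m Ls Hm Hlin. lia.
  destruct (classic (forall i, (i < m)%nat -> Ls i (unit_v N) = 0)) as [Hall|Hn].
  - exists (unit_v N). split; [|split].
    + intros i Hi. unfold unit_v. destruct (Nat.eq_dec i N); [lia|reflexivity].
    + exists N. split. lia. unfold unit_v. destruct (Nat.eq_dec N N); [lra|congruence].
    + exact Hall.
  - apply not_all_ex_not in Hn. destruct Hn as [p Hp].
    apply imply_to_and in Hp. destruct Hp as [Hpm Hpe].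
    set (e := unit_v N). set (Lp := Ls p). set (al := Lp e).
    assert (He : supp (S N) e).
    { intros i Hi. unfold e, unit_v. destruct (Nat.eq_dec i N); [lia|reflexivity]. }
    assert (HLp : linN (S N) Lp) by (apply Hlin; auto).
    set (phi := fun c : nat -> R => fun i => al * c i + (- Lp c) * e i).
    assert (Hphis : forall c, supp N c -> supp (S N) (phi c)).
    { intros c Hc i Hi. unfold phi. rewrite (He i Hi), (Hc i) by lia. ring. }
    assert (Hphil : forall f g c, supp N f -> supp N g ->
       phi (fun i => c * f i + g i) = fun i => c * phi f i + phi g i).
    { intros f g c Hf Hg. unfold phi.
      rewrite (HLp f g c (supp_S _ _ Hf) (supp_S _ _ Hg)).
      apply functional_extensionality. intros i. ring. }
    set (Ls' := fun i => if lt_dec i p then fun c => Ls i (phi c)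
                         else fun c => Ls (S i) (phi c)).
    destruct (IH (m - 1)%nat Ls') as [c [Hc [[i0 [Hi0 Hci0]] Hker]]].
    + lia.
    + intros i Hi f g x Hf Hg. unfold Ls'.
      destruct (lt_dec i p).
      * rewrite Hphil by auto. apply Hlin; [lia| apply Hphis; auto | apply Hphis; auto].
      * rewrite Hphil by auto. apply Hlin; [lia| apply Hphis; auto | apply Hphis; auto].
    + exists (phi c). split; [|split].
      * intros i Hi. apply Hphis; auto.
      * exists i0. split. lia. unfold phi, e, unit_v.
        destruct (Nat.eq_dec i0 N). lia.
        intro H. apply Hci0. apply (Rmult_eq_reg_l al). lra. exact Hpe.
      * intros i Hi. destruct (lt_eq_lt_dec i p) as [[Hlt|Heq]|Hgt].
        -- pose proof (Hker i ltac:(lia)) as H. unfold Ls' in H.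
           destruct (lt_dec i p); [exact H|lia].
        -- subst i. fold Lp. unfold phi.
           rewrite (lin_comb (S N) Lp c e al (- Lp c) HLp (supp_S _ _ Hc) He).
           fold al. ring.
        -- destruct i as [|i']. lia.
           pose proof (Hker i' ltac:(lia)) as H. unfold Ls' in H.
           destruct (lt_dec i' p); [lia|exact H].
Qed.

Lemma data_same s f h k :
  (forall i, (i < k)%nat -> forall L, next s (data s f i) = Some L -> L h = L f) ->
  forall i, (i <= k)%nat -> data s h i = data s f i.
Proof.
  intros H i. induction i as [|i IH]; intros Hi; simpl. reflexivity.
  rewrite IH by lia. destruct (next s (data s f i)) eqn:E; [|reflexivity].
  rewrite (H i ltac:(lia) _ E). reflexivity.
Qed.

Lemma stop_unique s f k1 k2 : stop_time s f k1 -> stop_time s f k2 -> k1 = k2.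
Proof.
  intros [H1 H1'] [H2 H2']. destruct (lt_eq_lt_dec k1 k2) as [[H|H]|H]; auto.
  - exfalso. exact (H2' k1 H H1).
  - exfalso. exact (H1' k2 H H2).
Qed.

Fixpoint spike (n : nat -> nat) (c : nat -> R) (J : nat) (i : nat) : R :=
  match J with
  | O => 0
  | S J' => spike n c J' i + (if Nat.eq_dec i (n J') then c J' else 0)
  end.

Lemma n_mono (n : nat -> nat) : (forall k, (n k < n (S k))%nat) ->
  forall k k', (k < k')%nat -> (n k < n k')%nat.
Proof.
  intros Hn k k' H. induction H. apply Hn. specialize (Hn m). lia.
Qed.

Lemma spike_off n c J i : (forall k, (k < J)%nat -> i <> n k) -> spike n c J i = 0.
Proof.
  induction J; intros H; simpl. reflexivity.
  rewrite IHJ by (intros; apply H; lia).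
  destruct (Nat.eq_dec i (n J)). exfalso; apply (H J); auto. ring.
Qed.

Lemma spike_at n c J k : (forall k, (n k < n (S k))%nat) -> (k < J)%nat ->
  spike n c J (n k) = c k.
Proof.
  intros Hn. induction J; intros H; simpl. lia.
  destruct (Nat.eq_dec k J).
  - subst. rewrite spike_off. destruct (Nat.eq_dec (n J) (n J)); [ring|congruence].
    intros k Hk. pose proof (n_mono n Hn k J Hk). lia.
  - rewrite IHJ by lia. destruct (Nat.eq_dec (n k) (n J)).
    + exfalso. assert (hh : (k < J \/ J < k)%nat) by lia. destruct hh as [h|h];
      [pose proof (n_mono n Hn _ _ h)|pose proof (n_mono n Hn _ _ h)]; lia.
    + ring.
Qed.

Lemma lam_anti (lam : nat -> R) : (forall i, lam (S i) <= lam i) ->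
  forall i i', (i <= i')%nat -> lam i' <= lam i.
Proof.
  intros H i i' Hi. induction Hi. lra. specialize (H m). lra.
Qed.

Lemma pow_le1 (b : R) r : 0 <= b -> b <= 1 -> b ^ r <= 1.
Proof.
  intros h0 h1. induction r; simpl. lra.
  assert (0 <= b ^ r) by (apply pow_le; auto). nra.
Qed.

Lemma pwZ_ge1 (b : R) (z : Z) : 0 < b -> b <= 1 -> (z <= 0)%Z -> 1 <= powerRZ b z.
Proof.
  intros h0 h1 hz.
  assert (Hz : z = (- Z.of_nat (Z.to_nat (- z)))%Z) by lia.
  assert (E : powerRZ b z * b ^ (Z.to_nat (- z)) = 1).
  { rewrite pow_powerRZ, <- powerRZ_add by lra.
    replace (z + Z.of_nat (Z.to_nat (- z)))%Z with 0%Z by lia. reflexivity. }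
  pose proof (pow_le1 b (Z.to_nat (-z)) ltac:(lra) h1).
  pose proof (pow_lt b (Z.to_nat (-z)) h0).
  pose proof (powerRZ_lt b z h0). nra.
Qed.

Lemma block_split (w F h : nat -> R) lo hi : (lo <= hi)%nat ->
  (forall i, (lo < i <= hi)%nat -> F i = h i) ->
  sum_n_m (fun i => (w i * F i) ^ 2) lo hi =
  (w lo * F lo) ^ 2 + sum_n_m (fun i => (w i * h i) ^ 2) (S lo) hi.
Proof.
  intros Hl H. rewrite sum_Sn_m by auto. change (plus ?x ?y) with (x + y).
  f_equal. apply sum_n_m_ext_loc. intros k Hk. rewrite H by lia. reflexivity.
Qed.

Lemma sum_zero_loc (a : nat -> R) lo hi : (forall i, (lo <= i <= hi)%nat -> a i = 0) ->
  sum_n_m a lo hi = 0.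
Proof.
  intros H. rewrite (sum_n_m_ext_loc a (fun _ => 0)) by auto.
  rewrite sum_n_m_const. apply Rmult_0_r.
Qed.

Definition coef (lam : nat -> R) (n : nat -> nat) (b D : R) (j : nat) (k : nat) : R :=
  D * powerRZ b (Z.of_nat (S k) - Z.of_nat j) / lam (n k).

Lemma sqrt_bounds (Z s E x Y : R) :
  Z = (x + s) ^ 2 + Y -> x ^ 2 + Y <= E ^ 2 -> 0 <= Y -> 0 <= E -> E <= s ->
  s - E <= sqrt Z <= s + E.
Proof.
  intros HZ HB HY HE Hs.
  assert (Hx : -E <= x <= E).
  { split; nra. }
  split.
  - rewrite <- (sqrt_pow2 (s - E)) by lra. apply sqrt_le_1_alt. nra.
  - rewrite <- (sqrt_pow2 (s + E)) by lra. apply sqrt_le_1_alt. nra.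
Qed.

Section Cone.
Variables (lam : nat -> R) (n : nat -> nat) (a b E D : R) (j : nat) (h : nat -> R).
Hypothesis lam_pos : forall i, 0 < lam i.
Hypothesis n_incr : forall k, (n k < n (S k))%nat.
Hypothesis hb : 0 < b.
Hypothesis hb1 : b < 1.
Hypothesis ha : 1 < a.
Hypothesis hE : 0 <= E.
Hypothesis hD : (a - 1) * D = (a + 1) * E.
Hypothesis hsupp : supp (n j) h.
Hypothesis hQ : sum_n_m (fun i => (lam i * h i) ^ 2) 0 (n j - 1) <= E ^ 2.

Let F := fun i => h i + spike n (coef lam n b D j) j i.

Lemma D_ge_E : E <= D.
Proof. nra. Qed.

Lemma block_in K : (1 <= K <= j)%nat ->
  let s := D * powerRZ b (Z.of_nat K - Z.of_nat j) in
  s - E <= Defs.sigma lam n F K <= s + E.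
Proof.
  intros HK. destruct K as [|K']; [lia|]. intros s.
  unfold Defs.sigma. replace (S K' - 1)%nat with K' by lia.
  set (lo := n K'). set (hi := (n (S K') - 1)%nat).
  assert (Hlohi : (lo < n (S K'))%nat) by apply n_incr.
  assert (Hin : forall i, (lo < i <= hi)%nat -> F i = h i).
  { intros i Hi. unfold F. rewrite spike_off. ring.
    intros k Hk Heq. subst i.
    assert (hh : (k < K' \/ k = K' \/ S K' <= k)%nat) by lia.
    destruct hh as [h1|[h1|h1]].
    - pose proof (n_mono n n_incr _ _ h1). unfold lo in *. lia.
    - subst. unfold lo in *. lia.
    - assert (n (S K') <= n k)%nat.
      { destruct (Nat.eq_dec (S K') k). subst; lia.
        pose proof (n_mono n n_incr (S K') k ltac:(lia)). lia. }
      unfold hi in *. lia. }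
  rewrite (block_split lam F h lo hi) by (auto; unfold hi; lia).
  assert (HFlo : lam lo * F lo = lam lo * h lo + s).
  { unfold F, lo. rewrite spike_at by (auto; lia). unfold coef, s.
    field. pose proof (lam_pos (n K')). lra. }
  rewrite HFlo.
  assert (Hs1 : 1 <= powerRZ b (Z.of_nat (S K') - Z.of_nat j)) by (apply pwZ_ge1; lia || lra).
  assert (HDE := D_ge_E).
  apply (sqrt_bounds _ s E (lam lo * h lo) (sum_n_m (fun i => (lam i * h i) ^ 2) (S lo) hi)).
  - ring.
  - rewrite <- (block_split lam h h lo hi) by (auto; unfold hi; lia).
    eapply Rle_trans; [|exact hQ]. apply sum_sub.
    + intros; apply pow2_ge_0.
    + unfold hi. destruct (Nat.eq_dec (S K') j). subst; lia.
      pose proof (n_mono n n_incr (S K') j ltac:(lia)). lia.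
  - apply sum_nonneg. intros; apply pow2_ge_0.
  - auto.
  - unfold s. nra.
Qed.

Lemma block_out K : (j < K)%nat -> Defs.sigma lam n F K = 0.
Proof.
  intros HK. unfold Defs.sigma. rewrite sum_zero_loc. apply sqrt_0.
  intros i Hi. unfold F. rewrite hsupp, spike_off. ring.
  - intros k Hk Heq. subst i.
    destruct (Nat.eq_dec k (K - 1)). lia.
    pose proof (n_mono n n_incr k (K - 1) ltac:(lia)). lia.
  - destruct (Nat.eq_dec j (K - 1)). subst; lia.
    pose proof (n_mono n n_incr j (K - 1) ltac:(lia)). lia.
Qed.

Lemma F_l2 : l2 F.
Proof.
  apply (supp_l2 (n j)). intros i Hi. unfold F. rewrite hsupp by auto.
  rewrite spike_off. ring. intros k Hk Heq. subst.
  pose proof (n_mono n n_incr k j Hk). lia.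
Qed.

Lemma F_cone : cone lam n a b F.
Proof.
  split. apply F_l2.
  intros K r HK Hr.
  assert (Hsig0 : 0 <= Defs.sigma lam n F K) by apply sqrt_pos.
  assert (Hbr : 0 < b ^ r) by (apply pow_lt; auto).
  assert (Hbr1 : b ^ r <= 1) by (apply pow_le1; lra).
  destruct (le_lt_dec (K + r) j) as [Hle|Hgt].
  2:{ rewrite block_out by auto. apply Rmult_le_pos; [nra|auto]. }
  pose proof (block_in K ltac:(lia)) as [HK1 HK2].
  pose proof (block_in (K + r) ltac:(lia)) as [HKr1 HKr2].
  set (p := powerRZ b (Z.of_nat K - Z.of_nat j)) in *.
  assert (Hpr : powerRZ b (Z.of_nat (K + r) - Z.of_nat j) = b ^ r * p).
  { unfold p. rewrite pow_powerRZ, <- powerRZ_add by lra. f_equal. lia. }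
  rewrite Hpr in HKr2.
  assert (Hge : 1 <= b ^ r * p) by (rewrite <- Hpr; apply pwZ_ge1; lia || lra).
  assert (HDE := D_ge_E).
  assert (Hs : Defs.sigma lam n F (K + r) <= D * (b ^ r * p) + E) by lra.
  apply Rle_trans with (D * (b ^ r * p) + E). lra.
  apply Rle_trans with (a * b ^ r * (D * p - E)).
  2:{ apply Rmult_le_compat_l. nra. lra. }
  assert (H1 : D <= D * (b ^ r * p)).
  { rewrite <- (Rmult_1_r D) at 1. apply Rmult_le_compat_l; lra. }
  assert (H2 : 0 <= (a - 1) * (D * (b ^ r * p) - D)) by (apply Rmult_le_pos; lra).
  assert (H3 : 0 <= a * E * (1 - b ^ r)) by (apply Rmult_le_pos; [apply Rmult_le_pos|]; lra).
  replace (a * b ^ r * (D * p - E)) with (a * (D * (b ^ r * p)) - a * E * b ^ r) by ring.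
  nra.
Qed.

End Cone.

Lemma pw_sq (b : R) z : 0 < b -> powerRZ b z ^ 2 = powerRZ b (2 * z).
Proof.
  intros hb. replace (2 * z)%Z with (z + z)%Z by lia. rewrite powerRZ_add by lra. ring.
Qed.

Lemma norm_bound (lam : nat -> R) (n : nat -> nat) (b D : R) (j : nat)
  (lam_pos : forall i, 0 < lam i)
  (lam_noninc : forall i, lam (S i) <= lam i)
  (n_incr : forall k, (n k < n (S k))%nat)
  (n0_ge1 : (1 <= n 0)%nat) (hb : 0 < b) :
  forall J, (J <= j)%nat ->
  sum_n_m (fun i => (spike n (coef lam n b D j) j i) ^ 2) 0 (n J - 1) <=
  D ^ 2 * sum_n_m (fun k => powerRZ b (2 * (Z.of_nat k - Z.of_nat j))
                            / (lamN lam n k) ^ 2) 1 J.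
Proof.
  set (c := coef lam n b D j).
  induction J as [|J IH]; intros HJ.
  - rewrite sum_zero_loc. rewrite sum_n_m_zero by lia. change (0 <= D ^ 2 * 0). lra.
    intros i Hi. rewrite spike_off. simpl; ring.
    intros k Hk Heq. subst. destruct k. lia.
    pose proof (n_mono n n_incr 0 (S k) ltac:(lia)). lia.
  - assert (HnJ : (1 <= n J)%nat).
    { destruct J. lia. pose proof (n_mono n n_incr 0 (S J) ltac:(lia)). lia. }
    assert (HnJS : (n J < n (S J))%nat) by apply n_incr.
    rewrite (sum_n_m_Chasles _ 0 (n J - 1) (n (S J) - 1)) by lia.
    rewrite (sum_n_Sm _ 1 J) by lia.
    change (plus ?x ?y) with (x + y).
    replace (S (n J - 1)) with (n J) by lia.
    rewrite (sum_n_m_ext _ (fun i => (1 * spike n c j i) ^ 2) (n J) (n (S J) - 1))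
      by (intros; cbv beta; rewrite Rmult_1_l; reflexivity).
    assert (Hoff : forall i, (n J < i <= n (S J) - 1)%nat -> spike n c j i = 0).
    { intros i Hi; apply spike_off; intros k Hk Heq; subst i.
      assert (hh : (k < J \/ k = J \/ S J <= k)%nat) by lia.
      destruct hh as [h1|[h1|h1]].
      - pose proof (n_mono n n_incr _ _ h1); lia.
      - subst; lia.
      - destruct (Nat.eq_dec (S J) k); [subst; lia|].
        pose proof (n_mono n n_incr (S J) k ltac:(lia)); lia. }
    pose proof (block_split (fun _ => 1) (spike n c j) (fun _ => 0) (n J) (n (S J) - 1) ltac:(lia) ltac:(intros i Hi; apply Hoff; lia)) as HB. cbv beta in HB. rewrite HB.
    rewrite (sum_zero_loc _ (S (n J)) (n (S J) - 1)) by (intros; cbv beta; ring).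
    rewrite spike_at by (auto; lia).
    specialize (IH ltac:(lia)).
    assert (Hlast : (1 * c J) ^ 2 + 0 <=
       D ^ 2 * (powerRZ b (2 * (Z.of_nat (S J) - Z.of_nat j)) / lamN lam n (S J) ^ 2)).
    { unfold c, coef, lamN.
      rewrite <- pw_sq by auto.
      set (p := powerRZ b (Z.of_nat (S J) - Z.of_nat j)).
      assert (h1 : lam (n (S J) - 1)%nat <= lam (n J)) by (apply lam_anti; auto; lia).
      assert (h0 := lam_pos (n (S J) - 1)%nat).
      assert (h2 := lam_pos (n J)).
      replace ((1 * (D * p / lam (n J))) ^ 2 + 0) with ((D * p) ^ 2 * / (lam (n J) ^ 2)) by (field; lra).
      replace (D ^ 2 * (p ^ 2 / lam (n (S J) - 1)%nat ^ 2)) with ((D * p) ^ 2 * / (lam (n (S J) - 1)%nat ^ 2)) by (field; lra).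
      apply Rmult_le_compat_l. apply pow2_ge_0.
      apply Rinv_le_contravar. apply pow_lt; lra.
      apply pow_incr. lra. }
    lra.
Qed.

Lemma sum_ext_R (u v : nat -> R) lo hi : (forall i, u i = v i) -> sum_n_m u lo hi = sum_n_m v lo hi.
Proof. intros H. apply sum_n_m_ext. exact H. Qed.

Lemma sum_scal_R (c : R) (u : nat -> R) lo hi :
  sum_n_m (fun i => c * u i) lo hi = c * sum_n_m u lo hi.
Proof. exact (sum_n_m_mult_l c u lo hi). Qed.

Theorem theorem2
  (lam : nat -> R) (n : nat -> nat) (a b : R)
  (lam_pos : forall i, 0 < lam i)
  (lam_noninc : forall i, lam (S i) <= lam i)
  (lam_lim : is_lim_seq lam 0)
  (n_incr : forall k, (n k < n (S k))%nat)
  (n0_ge1 : (1 <= n 0)%nat)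
  (hb : 0 < b) (hb1 : b < 1) (ha : 1 < a)
  (Rsup : R)
  (hR : is_lub (fun r => exists k : nat, (1 <= k)%nat /\
                   r = lamN lam n (k - 1) / lamN lam n k) Rsup)
  (eps rho : R) (heps : 0 < eps) (hrho : 0 < rho)
  (j : nat) (hj : (1 <= j)%nat)
  (hcond : ((a + 1) ^ 2 * Rsup ^ 2 / (a - 1) ^ 2 + 1) *
           sum_n (fun k => powerRZ b (2 * (Z.of_nat k - Z.of_nat j))
                            / (lamN lam n k) ^ 2) j
           < rho ^ 2 / eps ^ 2) :
  comp_ge lam (cone lam n a b) eps rho (n j).
Proof.
  set (T := fun k => powerRZ b (2 * (Z.of_nat k - Z.of_nat j)) / (lamN lam n k) ^ 2).
  set (S0 := sum_n T j) in hcond.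
  set (K0 := (a + 1) ^ 2 * Rsup ^ 2 / (a - 1) ^ 2 + 1) in hcond.
  set (C := (a + 1) ^ 2 / (a - 1) ^ 2).
  change (K0 * S0 < rho ^ 2 / eps ^ 2) in hcond.
  assert (HT : forall k, 0 <= T k).
  { intros k. unfold T. apply Rmult_le_pos. apply powerRZ_le; lra.
    apply Rlt_le, Rinv_0_lt_compat, pow_lt, lam_pos. }
  assert (HT0 : 0 < T 0%nat).
  { unfold T. apply Rmult_lt_0_compat. apply powerRZ_lt; lra.
    apply Rinv_0_lt_compat, pow_lt, lam_pos. }
  assert (HS1' : S0 = T 0%nat + sum_n_m T 1 j).
  { unfold S0, sum_n. rewrite (sum_Sn_m T 0 j) by lia. reflexivity. }
  assert (HS1 : sum_n_m T 1 j <= S0) by (pose proof (HT 0%nat); lra).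
  assert (HS0 : 0 < S0).
  { pose proof (sum_nonneg T 1 j HT). lra. }
  assert (HRs : 1 <= Rsup).
  { destruct hR as [Hub _]. 
    assert (H1 : lamN lam n 0 / lamN lam n 1 <= Rsup).
    { apply Hub. exists 1%nat. split. lia. reflexivity. }
    assert (H2 : lamN lam n 1 <= lamN lam n 0).
    { unfold lamN. apply lam_anti; auto. pose proof (n_incr 0%nat). lia. }
    assert (H3 : 0 < lamN lam n 1) by apply lam_pos.
    assert (1 <= lamN lam n 0 / lamN lam n 1).
    { apply (Rmult_le_reg_r (lamN lam n 1)); auto. field_simplify; lra. }
    lra. }
  assert (HCpos : 0 < C).
  { unfold C. apply Rdiv_lt_0_compat; apply pow_lt; lra. }
  assert (HCK : C <= K0).
  { unfold C, K0. assert (1 <= Rsup ^ 2) by nra.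
    assert (0 < (a - 1) ^ 2) by (apply pow_lt; lra).
    assert (0 <= (a + 1) ^ 2) by apply pow2_ge_0.
    unfold Rdiv. rewrite (Rmult_comm ((a+1)^2) (Rsup ^ 2)), Rmult_assoc.
    assert (0 <= (a + 1) ^ 2 * / (a - 1) ^ 2).
    { apply Rmult_le_pos; auto. apply Rlt_le, Rinv_0_lt_compat; auto. }
    nra. }
  assert (HKS : 0 < K0 * S0) by nra.
  set (E := rho / sqrt (K0 * S0)).
  assert (Hsq : 0 < sqrt (K0 * S0)) by (apply sqrt_lt_R0; auto).
  assert (HE2 : E ^ 2 * (K0 * S0) = rho ^ 2).
  { unfold E. rewrite <- (pow2_sqrt (K0 * S0)) at 2 by lra. field. lra. }
  assert (HE0 : 0 < E) by (unfold E; apply Rdiv_lt_0_compat; auto).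
  assert (HEeps : eps < E).
  { assert (eps ^ 2 * (K0 * S0) < rho ^ 2).
    { apply (Rmult_lt_reg_r (/ eps ^ 2)). apply Rinv_0_lt_compat, pow_lt; auto.
      replace (eps ^ 2 * (K0 * S0) * / eps ^ 2) with (K0 * S0) by (field; lra).
      exact hcond. }
    assert (eps ^ 2 < E ^ 2) by (apply (Rmult_lt_reg_r (K0 * S0)); lra).
    nra. }
  set (D := E * (a + 1) / (a - 1)).
  assert (hD : (a - 1) * D = (a + 1) * E) by (unfold D; field; lra).
  set (f1 := spike n (coef lam n b D j) j).
  assert (Hf1supp : supp (n j) f1).
  { intros i Hi. unfold f1. apply spike_off. intros k Hk Heq. subst.
    pose proof (n_mono n n_incr k j Hk). lia. }
  assert (Hf1eq : (fun i => (fun _ => 0) i + spike n (coef lam n b D j) j i) = f1).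
  { apply functional_extensionality. intros. cbv beta. unfold f1. ring. }
  assert (Hf1cone : cone lam n a b f1).
  { rewrite <- Hf1eq. apply F_cone with (E := E); auto; try lra.
    - apply supp_zero.
    - rewrite sum_zero_loc by (intros; ring). apply pow2_ge_0. }
  intros A HA. exists f1. split; [exact Hf1cone|]. split; [apply (supp_l2 _ _ Hf1supp)|].
  split.
  { unfold l2norm. rewrite <- (sqrt_pow2 rho) by lra. apply sqrt_le_1_alt.
    rewrite (is_series_unique _ _ (finite_series (fun i => f1 i ^ 2) (n j - 1) ltac:(
      intros i Hi; cbv beta; rewrite Hf1supp by lia; ring))).
    pose proof (norm_bound lam n b D j lam_pos lam_noninc n_incr n0_ge1 hb j (le_n j)) as NB.
    unfold sum_n. fold f1 in NB.
    assert (D ^ 2 = E ^ 2 * C) by (unfold D, C; field; lra).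
    fold T in NB.
    assert (E ^ 2 * C * S0 <= E ^ 2 * (K0 * S0)).
    { rewrite Rmult_assoc. apply Rmult_le_compat_l. apply pow2_ge_0. nra. }
    assert (D ^ 2 * sum_n_m T 1 j <= D ^ 2 * S0) by (apply Rmult_le_compat_l; [apply pow2_ge_0|auto]).
    nra. }
  intros k Hk.
  destruct (le_lt_dec (n j) k) as [Hle|Hlt]; [exact Hle|exfalso].
  set (s := A eps) in *.
  destruct (HA eps f1 heps Hf1cone) as [k1 [Hk1 [Hblf _]]].
  assert (k1 = k) by (apply (stop_unique s f1); auto). subst k1.
  set (Ls := fun i => match next s (data s f1 i) with Some L => L | None => fun _ => 0 end).
  destruct (kernel (n j) k Ls Hlt) as [g0 [Hg0s [[i0 [Hi0 Hg0i0]] Hker]]].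
  { intros i Hi. unfold Ls. destruct (next s (data s f1 i)) eqn:EN.
    - destruct (Hblf i Hi r EN) as [Hlin _].
      intros f g c Hf Hg. apply Hlin; eapply supp_l2; eauto.
    - intros f g c _ _. ring. }
  set (Q0 := sum_n_m (fun i => (lam i * g0 i) ^ 2) 0 (n j - 1)).
  assert (HQ0 : 0 < Q0).
  { apply Rlt_le_trans with ((lam i0 * g0 i0) ^ 2).
    - assert (Hx : lam i0 * g0 i0 <> 0).
      { intro H. apply Rmult_integral in H. destruct H as [H|H]; [pose proof (lam_pos i0); lra|auto]. }
      replace ((lam i0 * g0 i0) ^ 2) with (Rsqr (lam i0 * g0 i0)) by (unfold Rsqr; ring).
      apply Rsqr_pos_lt; auto.
    - unfold Q0. rewrite <- (sum_n_n (fun i => (lam i * g0 i) ^ 2) i0).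
      apply sum_sub. intros; apply pow2_ge_0. lia. }
  set (kap := E / sqrt Q0).
  set (g := fun i => kap * g0 i).
  assert (Hgs : supp (n j) g) by (apply supp_scale; auto).
  assert (HQg : @eq R (sum_n_m (fun i => (lam i * g i) ^ 2) 0 (n j - 1)) (E ^ 2)).
  { rewrite (sum_ext_R _ (fun i => kap ^ 2 * (lam i * g0 i) ^ 2)) by (intros; unfold g; ring).
    rewrite sum_scal_R. fold Q0. unfold kap.
    assert (Hq : 0 < sqrt Q0) by (apply sqrt_lt_R0; auto).
    rewrite <- (pow2_sqrt Q0) at 2 by lra. field. lra. }
  assert (HLf : forall i, (i < k)%nat -> forall L, next s (data s f1 i) = Some L ->
            forall t, L (fun x => t * g x + f1 x) = L f1).
  { intros i Hi L EN t. destruct (Hblf i Hi L EN) as [Hlin _].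
    assert (HlinN : linN (n j) L).
    { intros f g' c Hf Hg. apply Hlin; eapply supp_l2; eauto. }
    rewrite (HlinN g f1 t Hgs Hf1supp).
    unfold g. rewrite (lin_scale (n j) L g0 kap HlinN Hg0s).
    pose proof (Hker i Hi) as HK. unfold Ls in HK. rewrite EN in HK. rewrite HK. ring. }
  set (Ou := out s (data s f1 k)).
  assert (Hstep : forall t : R, t * t = 1 ->
     l2 (fun i => lam i * (t * g i + f1 i) - Ou i) /\
     Series (fun i => (lam i * (t * g i + f1 i) - Ou i) ^ 2) <= eps ^ 2).
  { intros t Ht. set (Ft := fun x => t * g x + f1 x).
    assert (HD : forall i, (i <= k)%nat -> data s Ft i = data s f1 i).
    { apply data_same. intros i Hi L EN. apply (HLf i Hi L EN t). }
    assert (Hcone : cone lam n a b Ft).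
    { apply F_cone with (E := E) (h := fun x => t * g x); auto; try lra.
      - apply supp_scale; auto.
      - rewrite (sum_ext_R _ (fun i => (lam i * g i) ^ 2)).
        + rewrite HQg. lra.
        + intros i. replace ((lam i * (t * g i)) ^ 2) with ((t * t) * (lam i * g i) ^ 2) by ring.
          rewrite Ht. ring. }
    destruct (HA eps Ft heps Hcone) as [k2 [Hk2 [_ [Hl2 Hnorm]]]].
    assert (Hst : stop_time s Ft k).
    { split.
      - rewrite HD by lia. exact (proj1 Hk).
      - intros k' Hk'. rewrite HD by lia. apply (proj2 Hk); auto. }
    assert (k2 = k) by (apply (stop_unique s Ft); auto). subst k2.
    unfold output in Hl2, Hnorm. rewrite HD in Hl2, Hnorm by lia.
    unfold Sop in Hl2, Hnorm. split. exact Hl2.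
    unfold l2norm in Hnorm.
    set (Ser := Series _) in Hnorm. change (Ser <= eps ^ 2).
    destruct (Rle_or_lt 0 Ser) as [Hp|Hn].
    - rewrite <- (pow2_sqrt Ser) by auto. apply pow_incr. split; [apply sqrt_pos|exact Hnorm].
    - pose proof (pow2_ge_0 eps). lra. }
  destruct (Hstep 1 ltac:(ring)) as [L1 S1].
  destruct (Hstep (-1) ltac:(ring)) as [L2 S2].
  set (X1 := fun i => lam i * (1 * g i + f1 i) - Ou i) in *.
  set (X2 := fun i => lam i * (-1 * g i + f1 i) - Ou i) in *.
  assert (Hser : Series (fun i => 2 * (lam i * g i) ^ 2) = 2 * E ^ 2).
  { rewrite (is_series_unique _ _ (finite_series (fun i => 2 * (lam i * g i) ^ 2) (n j - 1)
       ltac:(intros i Hi; cbv beta; rewrite Hgs by lia; ring))).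
    unfold sum_n. rewrite sum_scal_R, HQg. reflexivity. }
  assert (Hle : Series (fun i => 2 * (lam i * g i) ^ 2) <=
                Series (fun i => X1 i ^ 2 + X2 i ^ 2)).
  { apply Series_le.
    - intros i. split. pose proof (pow2_ge_0 (lam i * g i)). lra.
      assert (Hd : X1 i - X2 i = 2 * (lam i * g i)) by (unfold X1, X2; ring).
      replace (2 * (lam i * g i) ^ 2) with ((X1 i - X2 i) ^ 2 / 2) by (rewrite Hd; field).
      pose proof (pow2_ge_0 (X1 i + X2 i)).
      assert (X1 i ^ 2 + X2 i ^ 2 - (X1 i - X2 i) ^ 2 / 2 = (X1 i + X2 i) ^ 2 / 2) by field.
      lra.
    - exact (ex_series_plus _ _ L1 L2). }
  rewrite Series_plus in Hle by auto. rewrite Hser in Hle.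
  assert (0 < (E - eps) * (E + eps)) by (apply Rmult_lt_0_compat; lra).
  assert (E ^ 2 - eps ^ 2 = (E - eps) * (E + eps)) by ring.
  change (Series (fun i : nat => X1 i ^ 2) <= eps ^ 2) in S1. change (Series (fun i : nat => X2 i ^ 2) <= eps ^ 2) in S2. lra.
Qed.
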